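(* For Lebesgue almost every $y\in[0,1]$, the fibre $K_y:=\{x\in\mathbb{R}:(x,y)\in K\}$ contains a nontrivial interval.
   Context: For $k\ge 0$ and $n\ge 1$ let $t_{k,n}:=\frac{1}{2^k n}$. Define the similarities of $\mathbb{R}^2$: $U(x,y)=\left(\frac{x}{2},\frac{y+1}{2}\right)$, $D_0(x,y)=\left(\frac{x}{2},\frac{y}{2}\right)$, and $D_{k,n}(x,y)=\left(\frac{x+t_{k,n}}{2},\frac{y}{2}\right)$ for $k\ge0,n\ge1$. $K$ is the unique non-empty compact set $K\subset\mathbb{R}^2$ satisfying $K=U(K)\cup D_0(K)\cup\bigcup_{k\ge0,n\ge1}D_{k,n}(K)$. *)

(* Defs.v *)
From Stdlib Require Import Reals List.
Open Scope R_scope.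

Definition pt := (R * R)%type.

Definition in_ball (c : pt) (r : R) (p : pt) : Prop :=
  (fst p - fst c)^2 + (snd p - snd c)^2 < r^2.

Definition open2 (U : pt -> Prop) : Prop :=
  forall p, U p -> exists r, 0 < r /\ forall q, in_ball p r q -> U q.

Definition compact2 (K : pt -> Prop) : Prop :=
  forall (I : Type) (U : I -> pt -> Prop),
    (forall i, open2 (U i)) ->
    (forall p, K p -> exists i, U i p) ->
    exists l : list I, forall p, K p -> exists i, In i l /\ U i p.

Definition t (k n : nat) : R := 1 / (2 ^ k * INR n).

Definition Umap (p : pt) : pt := (fst p / 2, (snd p + 1) / 2).
Definition D0 (p : pt) : pt := (fst p / 2, snd p / 2).
Definition Dkn (k n : nat) (p : pt) : pt := ((fst p + t k n) / 2, snd p / 2).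

Definition is_attractor (K : pt -> Prop) : Prop :=
  forall p, K p <->
    ((exists q, K q /\ p = Umap q) \/
     (exists q, K q /\ p = D0 q) \/
     (exists k n, (1 <= n)%nat /\ exists q, K q /\ p = Dkn k n q)).

Definition lebesgue_null (N : R -> Prop) : Prop :=
  forall eps, 0 < eps ->
    exists a b : nat -> R,
      (forall i, a i <= b i) /\
      (forall y, N y -> exists i, a i <= y <= b i) /\
      (forall m, sum_f_R0 (fun i => b i - a i) m <= eps).

(* Main.v *)
Require Import Defs.
From Stdlib Require Import Reals Lia Lra List ZArith Classical.
Open Scope R_scope.

Lemma half_pow_pos n : 0 < (1/2)^n.
Proof. apply pow_lt; lra. Qed.

Lemma half_pow_le1 k : (1/2)^k <= 1.
Proof. induction k; simpl. lra. assert (0 < (1/2)^k) by (apply pow_lt; lra). lra. Qed.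

Lemma half_pow_le a b : (b <= a)%nat -> (1/2)^a <= (1/2)^b.
Proof.
  intros H. replace a with (b + (a - b))%nat by lia. rewrite pow_add.
  assert (0 < (1/2)^b) by apply half_pow_pos.
  assert ((1/2)^(a-b) <= 1) by apply half_pow_le1. nra.
Qed.

Lemma half_pow_S n : (1/2)^(S n) = (1/2)^n / 2.
Proof. simpl. field. Qed.

Lemma two_half_pow n : 2^n * (1/2)^n = 1.
Proof. induction n; simpl. lra. replace (2 * 2 ^ n * (1 / 2 * (1 / 2) ^ n)) with (2^n * (1/2)^n) by field. exact IHn. Qed.

Lemma half_pow_small eps : 0 < eps -> exists N, forall n, (n >= N)%nat -> (1/2)^n < eps.
Proof.
  intros He. destruct (pow_lt_1_zero (1/2)) with (y := eps) as [N HN].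
  rewrite Rabs_pos_eq; lra. exact He.
  exists N. intros n Hn. specialize (HN n Hn). rewrite Rabs_pos_eq in HN. exact HN.
  left; apply half_pow_pos.
Qed.

Fixpoint psum (f : nat -> R) (N : nat) : R :=
  match N with 0 => 0 | S n => psum f n + f n * (1/2)^(S n) end.

Lemma psum_shift f N : psum f (S N) = f 0%nat * (1/2) + psum (fun j => f (S j)) N * (1/2).
Proof.
  induction N. simpl. field.
  change (psum f (S (S N))) with (psum f (S N) + f (S N) * (1/2)^(S (S N))).
  rewrite IHN. simpl. field.
Qed.

Lemma psum_ext f g N : (forall j, (j < N)%nat -> f j = g j) -> psum f N = psum g N.
Proof.
  induction N; intros H; simpl. reflexivity.
  rewrite IHN by (intros; apply H; lia). rewrite H by lia. reflexivity.
Qed.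

Lemma step_lemma s tau tau' r : 0 < s -> 0 < tau' -> tau <= s/2 -> 2*tau*tau <= s*tau' ->
  0 <= r <= tau ->
  exists c, (c = 0 \/ exists m, (1 <= m)%nat /\ c = t 0 m) /\ 0 <= r - s*c <= tau'.
Proof.
  intros Hs Ht' Ht Ht2 Hr.
  destruct (Rle_lt_dec r tau') as [Hle|Hlt].
  - exists 0. split. left; reflexivity. lra.
  - assert (Hr0 : 0 < r) by lra.
    destruct (archimed (s/r)) as [A1 A2].
    set (M := IZR (up (s/r))) in *.
    assert (Hsr : 2 <= s/r).
    { apply Rmult_le_reg_r with r. lra. unfold Rdiv. rewrite Rmult_assoc, Rinv_l by lra. lra. }
    assert (HM : 2 < M) by lra.
    assert (HMz : (2 < up (s/r))%Z) by (apply lt_IZR; exact HM).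
    exists (t 0 (Z.to_nat (up (s/r)))). split.
    + right. exists (Z.to_nat (up (s/r))). split. lia. reflexivity.
    + unfold t. rewrite INR_IZR_INZ, Z2Nat.id by lia. fold M. simpl.
      replace (1 / (1 * M)) with (/M) by (field; lra).
      assert (E1 : s / r < M) by lra.
      assert (E2 : M - 1 <= s/r) by lra.
      assert (E3 : s < M * r).
      { apply Rmult_lt_compat_r with (r:=r) in E1; [|lra].
        unfold Rdiv in E1. rewrite Rmult_assoc, Rinv_l in E1 by lra. lra. }
      assert (E4 : (M-1) * r <= s).
      { apply Rmult_le_compat_r with (r:=r) in E2; [|lra].
        unfold Rdiv in E2. rewrite Rmult_assoc, Rinv_l in E2 by lra. lra. }
      assert (Hsm : s * /M = s / M) by reflexivity.
      assert (HsM : s / M <= r).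
      { apply Rmult_le_reg_r with M. lra.
        unfold Rdiv. rewrite Rmult_assoc, Rinv_l by lra. lra. }
      split.
      * unfold Rdiv in HsM. lra.
      *
        assert (Key : (r - s / M) * (M * (M-1)) <= s).
        { replace ((r - s / M) * (M * (M - 1))) with ((M-1)*(r*M - s)) by (field; lra).
          (* (M-1)(rM - s) <= s  <=> M(M-1) r <= M s  <=> (M-1) r <= s *)
          nra. }
        assert (Hm1 : s/(2*r) <= M - 1).
        { apply Rmult_le_reg_r with (2*r). lra.
          unfold Rdiv. rewrite Rmult_assoc, Rinv_l by lra. nra. }
        assert (Hm1' : s <= (M-1)*(2*r)).
        { apply Rmult_le_compat_r with (r:=2*r) in Hm1; [|lra].
          unfold Rdiv in Hm1. rewrite Rmult_assoc, Rinv_l in Hm1 by lra. lra. }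
        assert (Hprod : s*s <= (M*r)*((M-1)*(2*r))) by nra.
        assert (HX : 0 <= r - s/M) by lra.
        assert (H5 : (r - s/M) * (s*s) <= s * (2*r*r)).
        { apply Rle_trans with ((r - s/M) * ((M*r)*((M-1)*(2*r)))). apply Rmult_le_compat_l; lra.
          replace ((r - s / M) * (M * r * ((M - 1) * (2 * r)))) with (((r - s / M) * (M * (M-1))) * (2*r*r)) by ring.
          apply Rmult_le_compat_r. nra. exact Key. }
        assert (H6 : (r - s/M) * s <= 2*r*r) by nra.
        assert (H7 : 2*r*r <= 2*tau*tau) by nra.
        unfold Rdiv in *. nra.
Qed.

Lemma sq_abs_lt a b r : 0 < r -> a^2 + b^2 < r^2 -> Rabs a < r.
Proof.
  intros Hr H. unfold Rabs. destruct (Rcase_abs a); nra.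
Qed.

Lemma K_closed (K : pt -> Prop) x y : compact2 K ->
  (forall eps, 0 < eps -> exists q, K q /\ Rabs (fst q - x) + Rabs (snd q - y) < eps) ->
  K (x, y).
Proof.
  intros HC Happ. apply NNPP. intros HnK.
  set (U := fun (n : nat) (q : pt) => (1/2)^n < Rabs (fst q - x) + Rabs (snd q - y)).
  destruct (HC nat U) as [l Hl].
  - intros n q Hq. unfold U in Hq.
    set (D := Rabs (fst q - x) + Rabs (snd q - y)) in *.
    exists ((D - (1/2)^n)/2). split. lra.
    intros z Hz. unfold in_ball in Hz.
    assert (H1 : Rabs (fst z - fst q) < (D - (1/2)^n)/2).
    { apply sq_abs_lt with (snd z - snd q). lra. exact Hz. }
    assert (H2 : Rabs (snd z - snd q) < (D - (1/2)^n)/2).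
    { apply sq_abs_lt with (fst z - fst q). lra. lra. }
    unfold U. unfold D in *.
    revert H1 H2 Hq. unfold Rabs.
    destruct (Rcase_abs (fst z - fst q)), (Rcase_abs (snd z - snd q)),
      (Rcase_abs (fst q - x)), (Rcase_abs (snd q - y)),
      (Rcase_abs (fst z - x)), (Rcase_abs (snd z - y)); lra.
  - intros q Hq.
    assert (HD : 0 < Rabs (fst q - x) + Rabs (snd q - y)).
    { destruct (Req_dec (Rabs (fst q - x) + Rabs (snd q - y)) 0) as [E|E].
      - exfalso. apply HnK.
        assert (Rabs (fst q - x) = 0) by (pose proof (Rabs_pos (fst q - x)); pose proof (Rabs_pos (snd q - y)); lra).
        assert (Rabs (snd q - y) = 0) by (pose proof (Rabs_pos (fst q - x)); pose proof (Rabs_pos (snd q - y)); lra).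
        assert (fst q = x) by (revert H; unfold Rabs; destruct Rcase_abs; lra).
        assert (snd q = y) by (revert H0; unfold Rabs; destruct Rcase_abs; lra).
        destruct q as [q1 q2]; simpl in *. replace x with q1 by lra. replace y with q2 by lra. exact Hq.
      - pose proof (Rabs_pos (fst q - x)); pose proof (Rabs_pos (snd q - y)); lra. }
    destruct (half_pow_small _ HD) as [N HN]. exists N. apply HN. lia.
  - destruct (Happ ((1/2)^(list_max l))) as [q [Hq Hd]]. apply half_pow_pos.
    destruct (Hl q Hq) as [i [Hi HU]]. unfold U in HU.
    assert (Hle : (i <= list_max l)%nat).
    { assert (Forall (fun k => k <= list_max l)%nat l) by (apply list_max_le; lia).
      rewrite Forall_forall in H. apply H; exact Hi. }
    pose proof (half_pow_le _ _ Hle). lra.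
Qed.

Definition pairok (c d : R) : Prop :=
  (c = 0 /\ d = 1) \/ (c = 0 /\ d = 0) \/ (d = 0 /\ exists m, (1 <= m)%nat /\ c = t 0 m).

Lemma K_step (K : pt -> Prop) q c d : is_attractor K -> K q -> pairok c d ->
  K ((fst q + c)/2, (snd q + d)/2).
Proof.
  intros HA Hq Hp. apply HA.
  destruct Hp as [[-> ->]|[[-> ->]|[-> [m [Hm ->]]]]].
  - left. exists q. split. exact Hq. unfold Umap. f_equal; lra.
  - right; left. exists q. split. exact Hq. unfold D0. f_equal; lra.
  - right; right. exists 0%nat, m. split. exact Hm. exists q. split. exact Hq. unfold Dkn. f_equal; lra.
Qed.

Lemma K_fin (K : pt -> Prop) p0 : is_attractor K -> K p0 ->
  forall N c d, (forall j, (j < N)%nat -> pairok (c j) (d j)) ->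
  K (psum c N + fst p0 * (1/2)^N, psum d N + snd p0 * (1/2)^N).
Proof.
  intros HA H0 N. induction N; intros c d Hcd.
  - simpl. destruct p0; simpl. replace (0 + r * 1) with r by ring. replace (0 + r0*1) with r0 by ring. exact H0.
  - pose proof (IHN (fun j => c (S j)) (fun j => d (S j)) ltac:(intros j Hj; apply Hcd; lia)) as HK.
    pose proof (K_step K _ (c 0%nat) (d 0%nat) HA HK (Hcd 0%nat ltac:(lia))) as HS.
    simpl fst in HS. simpl snd in HS.
    rewrite !psum_shift.
    replace (c 0%nat * (1 / 2) + psum (fun j : nat => c (S j)) N * (1 / 2) + fst p0 * (1 / 2) ^ S N)
      with ((psum (fun j : nat => c (S j)) N + fst p0 * (1 / 2) ^ N + c 0%nat) / 2) by (simpl; field).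
    replace (d 0%nat * (1 / 2) + psum (fun j : nat => d (S j)) N * (1 / 2) + snd p0 * (1 / 2) ^ S N)
      with ((psum (fun j : nat => d (S j)) N + snd p0 * (1 / 2) ^ N + d 0%nat) / 2) by (simpl; field).
    exact HS.
Qed.

Definition Fz (y : R) (n : nat) : Z := Int_part (2^n * y).
Definition Fr (y : R) (n : nat) : R := IZR (Fz y n).
Definition dig (y : R) (n : nat) : R := Fr y (S n) - 2 * Fr y n.

Lemma Fr_spec y n : Fr y n <= 2^n * y < Fr y n + 1.
Proof. unfold Fr, Fz. destruct (base_Int_part (2^n*y)). lra. Qed.

Lemma dig_01 y n : dig y n = 0 \/ dig y n = 1.
Proof.
  pose proof (Fr_spec y n). pose proof (Fr_spec y (S n)).
  unfold dig. unfold Fr in *.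
  replace (2 ^ S n * y) with (2 * (2^n*y)) in H0 by (simpl; ring).
  assert (A : (-1 < Fz y (S n) - 2 * Fz y n)%Z).
  { apply lt_IZR. rewrite minus_IZR, mult_IZR. simpl (IZR 2). simpl (IZR (-1)). lra. }
  assert (B : (Fz y (S n) - 2 * Fz y n < 2)%Z).
  { apply lt_IZR. rewrite minus_IZR, mult_IZR. simpl (IZR 2). lra. }
  assert (C : (Fz y (S n) - 2 * Fz y n = 0)%Z \/ (Fz y (S n) - 2 * Fz y n = 1)%Z) by lia.
  destruct C as [C|C]; [left|right]; apply (f_equal IZR) in C; rewrite minus_IZR, mult_IZR in C; simpl in C; lra.
Qed.

Lemma Fr0 y : 0 <= y < 1 -> Fr y 0 = 0.
Proof.
  intros Hy. pose proof (Fr_spec y 0). simpl in H. unfold Fr in *.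
  assert (A : (-1 < Fz y 0)%Z) by (apply lt_IZR; simpl; lra).
  assert (B : (Fz y 0 < 1)%Z) by (apply lt_IZR; simpl; lra).
  replace (Fz y 0) with 0%Z by lia. reflexivity.
Qed.

Lemma psum_dig y N : 0 <= y < 1 -> psum (dig y) N = Fr y N * (1/2)^N.
Proof.
  intros Hy. induction N. simpl. rewrite Fr0 by exact Hy. ring.
  simpl psum. rewrite IHN. unfold dig. simpl. field.
Qed.

Lemma psum_zero N : psum (fun _ => 0) N = 0.
Proof. induction N; simpl. reflexivity. rewrite IHN. ring. Qed.

Definition good (y : R) (J : nat) : Prop :=
  forall j, (J <= j)%nat -> exists z, (j < z)%nat /\ (2*z <= 3*j+1)%nat /\ dig y z = 0.

Definition leastzero (y : R) (N z : nat) : Prop :=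
  (N <= z)%nat /\ dig y z = 0 /\ forall j, (N <= j < z)%nat -> dig y j = 1.

Definition tau (z : nat) : R := (1/2)^(2*z+3).

Lemma leastzero_unique y N z z' : leastzero y N z -> leastzero y N z' -> z = z'.
Proof.
  intros [A1 [A2 A3]] [B1 [B2 B3]].
  destruct (Nat.lt_trichotomy z z') as [H|[H|H]]; auto.
  - specialize (B3 z ltac:(lia)). lra.
  - specialize (A3 z' ltac:(lia)). lra.
Qed.

Lemma leastzero_exists y N z : (N <= z)%nat -> dig y z = 0 -> exists z0, leastzero y N z0.
Proof.
  revert z. induction z as [z IH] using (well_founded_induction lt_wf).
  intros Hz Hd.
  destruct (classic (exists j, (N <= j < z)%nat /\ dig y j = 0)) as [[j [Hj Hdj]]|Hn].
  - apply (IH j ltac:(lia)); [lia|exact Hdj].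
  - exists z. split; [exact Hz|split; [exact Hd|]].
    intros j Hj. destruct (dig_01 y j) as [E|E]; [|exact E].
    exfalso. apply Hn. exists j. auto.
Qed.

Lemma greedy y J x z0 : 0 <= y < 1 -> good y J -> leastzero y J z0 -> 0 <= x <= tau z0 ->
  forall N, (J <= N)%nat -> forall z, leastzero y N z ->
  exists c, (forall j, (j < N)%nat -> pairok (c j) (dig y j)) /\ 0 <= x - psum c N <= tau z.
Proof.
  intros Hy Hg Hz0 Hx N. induction N; intros HN z Hz.
  - assert (J = 0%nat) by lia. subst J.
    rewrite (leastzero_unique _ _ _ _ Hz Hz0).
    exists (fun _ => 0). split. intros; lia. simpl. lra.
  - destruct (Nat.eq_dec J (S N)) as [E|E].
    + subst J. rewrite (leastzero_unique _ _ _ _ Hz Hz0).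
      exists (fun _ => 0). split.
      * intros j _. unfold pairok. destruct (dig_01 y j) as [D|D]; rewrite D; [right;left|left]; auto.
      * rewrite psum_zero. lra.
    + assert (HJN : (J <= N)%nat) by lia.
      destruct (dig_01 y N) as [D|D].
      *
        assert (HlN : leastzero y N N).
        { split; [lia|split; [exact D|]]. intros; lia. }
        destruct (IHN HJN N HlN) as [c [Hc Hr]].
        destruct (Hg N HJN) as [w [Hw1 [Hw2 Hw3]]].
        assert (Hzw : (z <= w)%nat).
        { destruct Hz as [Z1 [Z2 Z3]]. destruct (le_lt_dec z w) as [L|L]; [exact L|].
          specialize (Z3 w ltac:(lia)). lra. }
        destruct (step_lemma ((1/2)^(S N)) (tau N) (tau z) (x - psum c N)) as [v [Hv Hv2]].
        -- apply half_pow_pos.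
        -- unfold tau; apply half_pow_pos.
        -- unfold tau. replace ((1/2)^(S N) / 2) with ((1/2)^(S (S N))) by (simpl; field).
           apply half_pow_le. lia.
        -- unfold tau. replace (2 * (1 / 2) ^ (2 * N + 3) * (1 / 2) ^ (2 * N + 3))
             with ((1/2)^(4*N+5)) by (rewrite Rmult_assoc, <- pow_add; replace (2*N+3+(2*N+3))%nat with (S (4*N+5)) by lia; rewrite half_pow_S; field).
           rewrite <- pow_add. apply half_pow_le. lia.
        -- exact Hr.
        -- exists (fun j => if Nat.eqb j N then v else c j). split.
           ++ intros j Hj. destruct (Nat.eqb_spec j N) as [->|Ne].
              ** unfold pairok. rewrite D. destruct Hv as [->|Hv]; [right;left; auto|right;right; auto].
              ** apply Hc. lia.
           ++ simpl psum. rewrite Nat.eqb_refl.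
              rewrite (psum_ext _ c) by (intros j Hj; destruct (Nat.eqb_spec j N); [lia|reflexivity]).
              assert (v * (1/2 * (1/2)^N) = (1/2)^S N * v) by (simpl; ring).
              lra.
      *
        assert (HlN : leastzero y N z).
        { destruct Hz as [Z1 [Z2 Z3]]. split; [lia|split; [exact Z2|]].
          intros j Hj. destruct (Nat.eq_dec j N) as [->|Ne]; [exact D|]. apply Z3. lia. }
        destruct (IHN HJN z HlN) as [c [Hc Hr]].
        exists (fun j => if Nat.eqb j N then 0 else c j). split.
        -- intros j Hj. destruct (Nat.eqb_spec j N) as [->|Ne].
           ++ unfold pairok. rewrite D. left. auto.
           ++ apply Hc. lia.
        -- simpl psum. rewrite Nat.eqb_refl.
           rewrite (psum_ext _ c) by (intros j Hj; destruct (Nat.eqb_spec j N); [lia|reflexivity]).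
           lra.
Qed.

Fixpoint ssum (f : nat -> R) (M : nat) : R :=
  match M with 0 => 0 | S k => ssum f k + f k end.

Lemma sum_f_ssum f P : sum_f_R0 f P = ssum f (S P).
Proof. induction P; simpl. ring. simpl in IHP. rewrite IHP. reflexivity. Qed.

Lemma ssum_ext f g M : (forall n, (n < M)%nat -> f n = g n) -> ssum f M = ssum g M.
Proof. induction M; intros H; simpl. reflexivity. rewrite IHM by (intros; apply H; lia). rewrite H by lia. reflexivity. Qed.

Lemma ssum_block f a c v : (forall i, (i < c)%nat -> f (a+i)%nat = v) -> ssum f (a+c) = ssum f a + INR c * v.
Proof.
  induction c; intros H. simpl. rewrite Nat.add_0_r. ring.
  rewrite Nat.add_succ_r. simpl ssum. rewrite IHc by (intros; apply H; lia).
  rewrite H by lia. rewrite S_INR. ring.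
Qed.

Lemma ssum_mono f a k : (forall n, 0 <= f n) -> ssum f a <= ssum f (a + k).
Proof.
  intros H. induction k. rewrite Nat.add_0_r. lra.
  rewrite Nat.add_succ_r. simpl. specialize (H (a+k)%nat). lra.
Qed.

Lemma lt_pow2 n : (n < 2^n)%nat.
Proof. induction n. simpl; lia. rewrite Nat.pow_succ_r'. lia. Qed.

Lemma INR_pow2 L : INR (2^L) = 2^L.
Proof. rewrite pow_INR. reflexivity. Qed.

Definition lb (Kp L : nat) : R := if Nat.ltb L (2*Kp) then 0 else (1/2)^(L + Nat.div2 L).
Definition lenf (Kp n : nat) : R := if Nat.eqb n 0 then 0 else lb Kp (Nat.log2 n).

Definition Rr (l : nat) : R := 2 * (1/2)^(Nat.div2 l) + 2 * (1/2)^(Nat.div2 (S l)).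

Lemma lenf_nonneg Kp n : 0 <= lenf Kp n.
Proof. unfold lenf, lb. destruct (Nat.eqb n 0). lra. destruct Nat.ltb. lra. left; apply half_pow_pos. Qed.

Lemma ssum_pow Kp L : ssum (lenf Kp) (2^L) + Rr (Nat.max L (2*Kp)) <= 4 * (1/2)^Kp.
Proof.
  induction L.
  - unfold Rr. replace (Nat.max 0 (2*Kp)) with (2*Kp)%nat by lia.
    change (ssum (lenf Kp) (2^0)) with (0 + lenf Kp 0). unfold lenf. simpl Nat.eqb. cbv iota.
    rewrite Nat.div2_double. replace (S (2*Kp)) with (2*Kp+1)%nat by lia. rewrite Nat.div2_odd'. lra.
  - rewrite Nat.pow_succ_r'. replace (2 * 2^L)%nat with (2^L + 2^L)%nat by lia.
    rewrite (ssum_block _ _ _ (lb Kp L)).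
    2:{ intros i Hi. unfold lenf. destruct (Nat.eqb_spec (2^L+i) 0).
        pose proof (Nat.pow_nonzero 2 L). lia.
        rewrite (Nat.log2_unique' _ L i) by lia. reflexivity. }
    rewrite INR_pow2. unfold lb in *.
    destruct (Nat.ltb_spec L (2*Kp)).
    + replace (Nat.max (S L) (2*Kp)) with (Nat.max L (2*Kp)) by lia. lra.
    + replace (Nat.max (S L) (2*Kp)) with (S L) by lia.
      replace (Nat.max L (2*Kp)) with L in IHL by lia.
      unfold Rr in *. change (Nat.div2 (S (S L))) with (S (Nat.div2 L)) in *.
      rewrite pow_add, <- Rmult_assoc, two_half_pow, half_pow_S. lra.
Qed.

Lemma sum_bound Kp P : sum_f_R0 (lenf Kp) P <= 4 * (1/2)^Kp.
Proof.
  rewrite sum_f_ssum. pose proof (lt_pow2 (S P)).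
  replace (2^(S P))%nat with (S P + (2^(S P) - S P))%nat in * by lia.
  pose proof (ssum_mono (lenf Kp) (S P) (2 ^ S P - S P) (lenf_nonneg Kp)).
  pose proof (ssum_pow Kp (S P)).
  replace (2^(S P))%nat with (S P + (2^(S P) - S P))%nat in H1 by (pose proof (lt_pow2 (S P)); lia).
  assert (0 <= Rr (Nat.max (S P) (2*Kp))) by (unfold Rr; pose proof (half_pow_pos (Nat.div2 (Nat.max (S P) (2 * Kp)))); pose proof (half_pow_pos (Nat.div2 (S (Nat.max (S P) (2 * Kp))))); lra).
  lra.
Qed.

Definition acov (Kp n : nat) : R :=
  if Nat.eqb n 0 then 1 else
  if Nat.ltb (Nat.log2 n) (2*Kp) then 0 else
  (2^(Nat.div2 (Nat.log2 n)) * (INR (n - 2^(Nat.log2 n)) + 1) - 1) * (1/2)^(Nat.log2 n + Nat.div2 (Nat.log2 n)).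
Definition bcov (Kp n : nat) : R :=
  if Nat.eqb n 0 then 1 else
  if Nat.ltb (Nat.log2 n) (2*Kp) then 0 else
  (2^(Nat.div2 (Nat.log2 n)) * (INR (n - 2^(Nat.log2 n)) + 1)) * (1/2)^(Nat.log2 n + Nat.div2 (Nat.log2 n)).

Lemma cov_len Kp n : bcov Kp n - acov Kp n = lenf Kp n.
Proof. unfold bcov, acov, lenf, lb. destruct (Nat.eqb n 0). ring. destruct Nat.ltb; ring. Qed.

Lemma ones_run y L h : (forall i, (i < h)%nat -> dig y (L+i) = 1) ->
  Fr y (L+h) = 2^h * (Fr y L + 1) - 1.
Proof.
  induction h; intros H. rewrite Nat.add_0_r. simpl. ring.
  pose proof (H h ltac:(lia)) as Hd. unfold dig in Hd.
  rewrite Nat.add_succ_r. rewrite IHh in Hd by (intros; apply H; lia). simpl. lra.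
Qed.

Lemma cover_bad y Kp : 0 <= y < 1 -> ~ good y (2*Kp) ->
  exists n, acov Kp n <= y <= bcov Kp n.
Proof.
  intros Hy Hg. unfold good in Hg.
  apply not_all_ex_not in Hg. destruct Hg as [j Hj].
  apply imply_to_and in Hj. destruct Hj as [Hj Hnz].
  set (L := S j). set (h := Nat.div2 L).
  assert (Hones : forall i, (i < h)%nat -> dig y (L+i) = 1).
  { intros i Hi. destruct (dig_01 y (L+i)) as [D|D]; [|exact D].
    exfalso. apply Hnz. exists (L+i)%nat. split. unfold L; lia. split; [|exact D].
    assert (Hd : (2 * h <= L)%nat) by (unfold h; pose proof (Nat.div2_odd L) as HH; destruct (Nat.odd L); simpl Nat.b2n in HH; lia).
    unfold L in *. lia. }
  pose proof (ones_run y L h Hones) as Hrun.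
  pose proof (Fr_spec y L) as HL. pose proof (Fr_spec y (L+h)) as HLh.
  assert (HFz0 : (0 <= Fz y L)%Z).
  { assert (-1 < Fr y L). { assert (0 <= 2^L * y) by (apply Rmult_le_pos; [apply pow_le; lra|lra]). lra. }
    unfold Fr in H. assert (-1 < Fz y L)%Z by (apply lt_IZR; exact H). lia. }
  set (m := Z.to_nat (Fz y L)).
  assert (Hm : INR m = Fr y L) by (unfold m, Fr; rewrite INR_IZR_INZ, Z2Nat.id by exact HFz0; reflexivity).
  assert (HmL : (m < 2^L)%nat).
  { apply INR_lt. rewrite INR_pow2, Hm. assert (2^L * y < 2^L).
    { assert (0 < 2^L) by (apply pow_lt; lra). nra. } lra. }
  exists (2^L + m)%nat.
  assert (Hlog : Nat.log2 (2^L + m) = L) by (apply (Nat.log2_unique' _ _ m); lia).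
  assert (Hne : Nat.eqb (2^L + m) 0 = false).
  { apply Nat.eqb_neq. pose proof (Nat.pow_nonzero 2 L). lia. }
  assert (Hlt : Nat.ltb L (2*Kp) = false) by (apply Nat.ltb_ge; unfold L; lia).
  unfold acov, bcov. rewrite Hne, Hlog, Hlt. fold h.
  replace (2^L + m - 2^L)%nat with m by lia. rewrite Hm.
  rewrite <- Hrun.
  pose proof (two_half_pow (L+h)) as E. pose proof (half_pow_pos (L+h)) as P.
  split.
  - apply Rle_trans with (2^(L+h) * y * (1/2)^(L+h)).
    apply Rmult_le_compat_r; lra.
    replace (2^(L+h) * y * (1/2)^(L+h)) with (y * (2^(L+h) * (1/2)^(L+h))) by ring. rewrite E. lra.
  - replace (2 ^ h * (Fr y L + 1)) with (Fr y (L+h) + 1) by lra.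
    apply Rle_trans with (2^(L+h) * y * (1/2)^(L+h)).
    replace (2^(L+h) * y * (1/2)^(L+h)) with (y * (2^(L+h) * (1/2)^(L+h))) by ring. rewrite E. lra.
    apply Rmult_le_compat_r; lra.
Qed.

Theorem proposition2p5 :
  forall K : pt -> Prop,
    (exists p, K p) -> compact2 K -> is_attractor K ->
    exists N : R -> Prop, lebesgue_null N /\
      forall y, 0 <= y <= 1 -> ~ N y ->
        exists a b, a < b /\ forall x, a <= x <= b -> K (x, y).
Proof.
  intros K [p0 Hp0] HC HA.
  exists (fun y => 0 <= y <= 1 /\ (y = 1 \/ ~ exists J, good y J)). split.
  - intros eps Heps.
    destruct (half_pow_small (eps/4)) as [Kp HKp]. lra.
    specialize (HKp Kp (le_n _)).
    exists (acov Kp), (bcov Kp). split; [|split].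
    + intros i. pose proof (cov_len Kp i). pose proof (lenf_nonneg Kp i). lra.
    + intros y [Hy [E|Hb]].
      * subst y. exists 0%nat. unfold acov, bcov. simpl. lra.
      * assert (Hy1 : y < 1).
        { destruct (Req_dec y 1) as [->|Ne]; [|lra]. exfalso. apply Hb.
          exists 1%nat. intros j Hj1. exists (S j). split. lia. split. lia.
          unfold dig, Fr, Fz. rewrite !Rmult_1_r.
          replace (2^(S (S j))) with (IZR (2^(Z.of_nat (S (S j))))) by (rewrite pow_IZR; reflexivity).
          replace (2^(S j)) with (IZR (2^(Z.of_nat (S j)))) by (rewrite pow_IZR; reflexivity).
          rewrite <- (Int_part_spec (IZR (2^(Z.of_nat (S (S j))))) (2^(Z.of_nat (S (S j))))) by lra.
          rewrite <- (Int_part_spec (IZR (2^(Z.of_nat (S j)))) (2^(Z.of_nat (S j)))) by lra.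
          replace (2 * IZR (2 ^ Z.of_nat (S j))) with (IZR (2 * 2^Z.of_nat (S j))) by (rewrite mult_IZR; reflexivity).
          rewrite <- minus_IZR. rewrite (Nat2Z.inj_succ (S j)), Z.pow_succ_r by lia. rewrite Z.sub_diag. reflexivity. }
        apply cover_bad. lra. intros Hg. apply Hb. exists (2*Kp)%nat. exact Hg.
    + intros m. rewrite (sum_eq _ (lenf Kp)) by (intros; apply cov_len).
      pose proof (sum_bound Kp m). lra.
  - intros y Hy HN.
    assert (Hy1 : y <> 1) by (intros E; apply HN; split; [exact Hy|left; exact E]).
    assert (HJ : exists J, good y J) by (apply NNPP; intros H; apply HN; split; [exact Hy|right; exact H]).
    destruct HJ as [J Hg].
    assert (Hy' : 0 <= y < 1) by lra.
    assert (Hlz : forall N, (J <= N)%nat -> exists z, leastzero y N z).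
    { intros N HN'. destruct (Hg N HN') as [w [Hw1 [_ Hw3]]]. apply (leastzero_exists y N w). lia. exact Hw3. }
    destruct (Hlz J (le_n _)) as [z0 Hz0].
    exists 0, (tau z0). split. unfold tau; apply half_pow_pos.
    intros x Hx. apply K_closed. exact HC.
    intros eps Heps.
    set (C := 2 + Rabs (fst p0) + Rabs (snd p0)).
    assert (HCp : 0 < C) by (unfold C; pose proof (Rabs_pos (fst p0)); pose proof (Rabs_pos (snd p0)); lra).
    destruct (half_pow_small (eps / C)) as [N0 HN0]. apply Rdiv_lt_0_compat; lra.
    set (N := Nat.max J N0).
    destruct (Hlz N ltac:(lia)) as [z Hz].
    destruct (greedy y J x z0 Hy' Hg Hz0 Hx N ltac:(lia) z Hz) as [c [Hc Hr]].
    pose proof (K_fin K p0 HA Hp0 N c (dig y) Hc) as HK.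
    eexists. split. exact HK. simpl fst. simpl snd.
    rewrite psum_dig by exact Hy'.
    set (h := (1/2)^N).
    assert (Hh : 0 < h) by apply half_pow_pos.
    assert (Htau : tau z <= h) by (unfold tau, h; apply half_pow_le; destruct Hz; lia).
    assert (Hyh : 0 <= y - Fr y N * h < h).
    { pose proof (Fr_spec y N). pose proof (two_half_pow N). fold h in H0.
      split.
      - assert (Fr y N * h <= 2^N * y * h) by (apply Rmult_le_compat_r; lra).
        replace (2^N*y*h) with (y * (2^N*h)) in H1 by ring. rewrite H0 in H1. lra.
      - assert ((2^N * y) * h < (Fr y N + 1) * h) by (apply Rmult_lt_compat_r; lra).
        replace (2^N*y*h) with (y * (2^N*h)) in H1 by ring. rewrite H0 in H1. lra. }
    assert (Hhe : h * C < eps).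
    { specialize (HN0 N ltac:(lia)). fold h in HN0.
      apply Rmult_lt_compat_r with (r := C) in HN0; [|lra].
      unfold Rdiv in HN0. rewrite Rmult_assoc, Rinv_l in HN0 by lra. lra. }
    assert (A1 : Rabs (fst p0 * h) = Rabs (fst p0) * h) by (rewrite Rabs_mult, (Rabs_pos_eq h); lra).
    assert (A2 : Rabs (snd p0 * h) = Rabs (snd p0) * h) by (rewrite Rabs_mult, (Rabs_pos_eq h); lra).
    assert (T1 : Rabs (psum c N + fst p0 * h - x) <= h + Rabs (fst p0) * h).
    { rewrite <- A1. replace (psum c N + fst p0 * h - x) with (-(x - psum c N) + fst p0 * h) by ring.
      apply Rle_trans with (Rabs (-(x - psum c N)) + Rabs (fst p0 * h)). apply Rabs_triang.
      rewrite Rabs_Ropp, Rabs_pos_eq by lra. lra. }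
    assert (T2 : Rabs (Fr y N * h + snd p0 * h - y) <= h + Rabs (snd p0) * h).
    { rewrite <- A2. replace (Fr y N * h + snd p0 * h - y) with (-(y - Fr y N * h) + snd p0 * h) by ring.
      apply Rle_trans with (Rabs (-(y - Fr y N * h)) + Rabs (snd p0 * h)). apply Rabs_triang.
      rewrite Rabs_Ropp, Rabs_pos_eq by lra. lra. }
    unfold C in Hhe. lra.
Qed.
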